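(* Let $Z$ be a separable real Hilbert space and let $f:Z\to\mathbb{R}$ be a continuous convex function. Then there exist a unique closed linear subspace $X_f$ of $Z$, a unique vector $v_f\in X_f^{\perp}$, and a unique essentially directionally coercive convex function $c_f:X_f\to\mathbb{R}$ such that $$f(z)=c_f(P_{X_f}(z))+\langle v_f,z\rangle\quad\text{for all } z\in Z.$$ Moreover, $X_f=\overline{\mathrm{span}}\{u-w: u\in\partial f(z),\ w\in\partial f(y),\ z,y\in Z\}$, and $v_f=Q_{X_f}(\xi_0)$ for any $z_0\in Z$ and any $\xi_0\in\partial f(z_0)$, where $Q_{X_f}=I-P_{X_f}$ is the orthogonal projection of $Z$ onto $X_f^{\perp}$.
   Context: For a closed linear subspace $X$ of a Hilbert space $Z$, $P_X:Z\to X$ denotes the orthogonal projection and $X^\perp$ the orthogonal complement; $\overline{\mathrm{span}}(V)$ is the closure of the linear span of $V$. For a convex $f:Z\to\mathbb{R}$, $\partial f(x)=\{\xi\in Z: f(y)\ge f(x)+\langle \xi,y-x\rangle \text{ for all } y\in Z\}$. A function $g$ on a Banach space $X$ is directionally coercive if $\lim_{t\to\infty} g(x+tv)=\infty$ for every $x\in X$ and every $v\in X\setminus\{0\}$; it is essentially directionally coercive if there exists a continuous linear functional $\ell\in X^*$ such that $g-\ell$ is directionally coercive. *)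

(* Defs.v *)
From Stdlib Require Import Reals Lra Classical ClassicalEpsilon.
Open Scope R_scope.

Record PreHilbert := {
  hcar :> Type;
  hzero : hcar;
  hadd : hcar -> hcar -> hcar;
  hopp : hcar -> hcar;
  hscal : R -> hcar -> hcar;
  hinner : hcar -> hcar -> R;
  hadd_assoc : forall x y z, hadd x (hadd y z) = hadd (hadd x y) z;
  hadd_comm : forall x y, hadd x y = hadd y x;
  hadd_0l : forall x, hadd hzero x = x;
  hadd_oppr : forall x, hadd x (hopp x) = hzero;
  hscal_assoc : forall a b x, hscal a (hscal b x) = hscal (a * b) x;
  hscal_1 : forall x, hscal 1 x = x;
  hscal_addr : forall a x y, hscal a (hadd x y) = hadd (hscal a x) (hscal a y);
  hscal_addl : forall a b x, hscal (a + b) x = hadd (hscal a x) (hscal b x);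
  hinner_sym : forall x y, hinner x y = hinner y x;
  hinner_addl : forall x y z, hinner (hadd x y) z = hinner x z + hinner y z;
  hinner_scall : forall a x y, hinner (hscal a x) y = a * hinner x y;
  hinner_pos : forall x, 0 <= hinner x x;
  hinner_def : forall x, hinner x x = 0 -> x = hzero
}.

Arguments hzero {_}. Arguments hadd {_}. Arguments hopp {_}.
Arguments hscal {_}. Arguments hinner {_}.

Definition hsub {Z : PreHilbert} (x y : Z) : Z := hadd x (hopp y).
Definition hnorm {Z : PreHilbert} (x : Z) : R := sqrt (hinner x x).

Definition hCauchy {Z : PreHilbert} (u : nat -> Z) : Prop :=
  forall eps, 0 < eps -> exists N, forall m n, (N <= m)%nat -> (N <= n)%nat ->
    hnorm (hsub (u m) (u n)) < eps.
Definition hconverges {Z : PreHilbert} (u : nat -> Z) (l : Z) : Prop :=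
  forall eps, 0 < eps -> exists N, forall n, (N <= n)%nat -> hnorm (hsub (u n) l) < eps.

Record Hilbert := {
  hpre :> PreHilbert;
  hcomplete : forall u : nat -> hpre, hCauchy u -> exists l, hconverges u l
}.

Definition separable (Z : Hilbert) : Prop :=
  exists d : nat -> Z, forall z eps, 0 < eps -> exists n, hnorm (hsub (d n) z) < eps.

Definition closed_subspace {Z : PreHilbert} (X : Z -> Prop) : Prop :=
  X hzero /\
  (forall x y, X x -> X y -> X (hadd x y)) /\
  (forall a x, X x -> X (hscal a x)) /\
  (forall u l, (forall n, X (u n)) -> hconverges u l -> X l).

Definition orth {Z : PreHilbert} (X : Z -> Prop) (v : Z) : Prop :=
  forall x, X x -> hinner v x = 0.

Definition is_proj {Z : PreHilbert} (X : Z -> Prop) (z p : Z) : Prop :=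
  X p /\ orth X (hsub z p).

(** The orthogonal projection P_X (chosen by epsilon; it exists and is unique
    when X is a closed subspace of a Hilbert space). *)
Definition proj {Z : PreHilbert} (X : Z -> Prop) (z : Z) : Z :=
  epsilon (inhabits hzero) (fun p => is_proj X z p).

Definition coproj {Z : PreHilbert} (X : Z -> Prop) (z : Z) : Z :=
  hsub z (proj X z).

Definition closed_span {Z : PreHilbert} (S : Z -> Prop) (z : Z) : Prop :=
  forall Y : Z -> Prop, closed_subspace Y -> (forall s, S s -> Y s) -> Y z.

Definition subdiff {Z : PreHilbert} (f : Z -> R) (x xi : Z) : Prop :=
  forall y, f y >= f x + hinner xi (hsub y x).

Definition continuous_fun {Z : PreHilbert} (f : Z -> R) : Prop :=
  forall z eps, 0 < eps -> exists delta, 0 < delta /\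
    forall y, hnorm (hsub y z) < delta -> Rabs (f y - f z) < eps.

Definition convex_on {Z : PreHilbert} (X : Z -> Prop) (g : Z -> R) : Prop :=
  forall x y t, X x -> X y -> 0 <= t <= 1 ->
    g (hadd (hscal t x) (hscal (1 - t) y)) <= t * g x + (1 - t) * g y.

Definition convex {Z : PreHilbert} (f : Z -> R) : Prop := convex_on (fun _ => True) f.

Definition cont_linear_on {Z : PreHilbert} (X : Z -> Prop) (l : Z -> R) : Prop :=
  (forall x y, X x -> X y -> l (hadd x y) = l x + l y) /\
  (forall a x, X x -> l (hscal a x) = a * l x) /\
  (exists M, forall x, X x -> Rabs (l x) <= M * hnorm x).

Definition dir_coercive_on {Z : PreHilbert} (X : Z -> Prop) (g : Z -> R) : Prop :=
  forall x v, X x -> X v -> v <> hzero ->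
    forall M, exists T, forall t, T <= t -> M <= g (hadd x (hscal t v)).

Definition ess_dir_coercive_on {Z : PreHilbert} (X : Z -> Prop) (g : Z -> R) : Prop :=
  exists l, cont_linear_on X l /\ dir_coercive_on X (fun x => g x - l x).

Definition decomposition {Z : PreHilbert} (f : Z -> R)
    (X : Z -> Prop) (v : Z) (c : Z -> R) : Prop :=
  closed_subspace X /\ orth X v /\ convex_on X c /\ ess_dir_coercive_on X c /\
  forall z, f z = c (proj X z) + hinner v z.

(* Main.v *)
Require Import Defs.
From Stdlib Require Import Reals Lra Psatz Classical ClassicalEpsilon.
Open Scope R_scope.

Lemma ip_0l {Z : PreHilbert} (y : Z) : hinner hzero y = 0.
Proof.
  assert (H := hinner_addl Z hzero hzero y). rewrite hadd_0l in H. lra.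
Qed.
Lemma ip_addr {Z : PreHilbert} (x y z : Z) : hinner x (hadd y z) = hinner x y + hinner x z.
Proof. rewrite !(hinner_sym Z x). apply hinner_addl. Qed.
Lemma ip_scalr {Z : PreHilbert} a (x y : Z) : hinner x (hscal a y) = a * hinner x y.
Proof. rewrite !(hinner_sym Z x). apply hinner_scall. Qed.
Lemma ip_0r {Z : PreHilbert} (y : Z) : hinner y hzero = 0.
Proof. rewrite hinner_sym. apply ip_0l. Qed.
Lemma ip_oppl {Z : PreHilbert} (x y : Z) : hinner (hopp x) y = - hinner x y.
Proof.
  assert (H := hinner_addl Z x (hopp x) y). rewrite hadd_oppr, ip_0l in H. lra.
Qed.
Lemma ip_oppr {Z : PreHilbert} (x y : Z) : hinner y (hopp x) = - hinner y x.
Proof. rewrite !(hinner_sym Z y). apply ip_oppl. Qed.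
Lemma ip_subl {Z : PreHilbert} (x y z : Z) : hinner (hsub x y) z = hinner x z - hinner y z.
Proof. unfold hsub. rewrite hinner_addl, ip_oppl. ring. Qed.
Lemma ip_subr {Z : PreHilbert} (x y z : Z) : hinner z (hsub x y) = hinner z x - hinner z y.
Proof. unfold hsub. rewrite ip_addr, ip_oppr. ring. Qed.

Ltac ipsimpl := repeat first
  [ rewrite hinner_addl | rewrite ip_addr | rewrite hinner_scall | rewrite ip_scalr
  | rewrite ip_subl | rewrite ip_subr | rewrite ip_oppl | rewrite ip_oppr
  | rewrite ip_0l | rewrite ip_0r ].
Ltac ipsimpl_in H := repeat first
  [ rewrite hinner_addl in H | rewrite ip_addr in H | rewrite hinner_scall in H | rewrite ip_scalr in H
  | rewrite ip_subl in H | rewrite ip_subr in H | rewrite ip_oppl in H | rewrite ip_oppr in H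
  | rewrite ip_0l in H | rewrite ip_0r in H ].

Lemma sub_eq0 {Z : PreHilbert} (a b : Z) : hsub a b = hzero -> a = b.
Proof.
  intro H. unfold hsub in H.
  assert (E : hadd (hadd a (hopp b)) b = a).
  { rewrite <- hadd_assoc, (hadd_comm Z (hopp b)), hadd_oppr, hadd_comm, hadd_0l. reflexivity. }
  rewrite H, hadd_0l in E. auto.
Qed.

Lemma vec_eq {Z : PreHilbert} (a b : Z) : (forall w, hinner a w = hinner b w) -> a = b.
Proof.
  intro H. apply sub_eq0. apply hinner_def. ipsimpl. rewrite !H. ring.
Qed.

Lemma hnorm_ge0 {Z : PreHilbert} (x : Z) : 0 <= hnorm x.
Proof. apply sqrt_pos. Qed.
Lemma hnorm_sq {Z : PreHilbert} (x : Z) : hnorm x * hnorm x = hinner x x.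
Proof. apply sqrt_sqrt, hinner_pos. Qed.

Lemma CS_sq {Z : PreHilbert} (x y : Z) : hinner x y * hinner x y <= hinner x x * hinner y y.
Proof.
  destruct (Req_dec (hinner y y) 0) as [E|E].
  - apply hinner_def in E. subst. ipsimpl. nra.
  - assert (Hy := hinner_pos Z y).
    set (t := hinner x y / hinner y y).
    assert (H := hinner_pos Z (hsub x (hscal t y))). ipsimpl_in H.
    try rewrite (hinner_sym Z y x) in H.
    assert (Ht : t * hinner y y = hinner x y) by (unfold t; field; auto).
    assert (0 <= hinner x x - t * hinner x y) by nra.
    assert (hinner x y * hinner x y = t * hinner x y * hinner y y) by (rewrite <- Ht; ring).
    nra.
Qed.

Lemma CS {Z : PreHilbert} (x y : Z) : Rabs (hinner x y) <= hnorm x * hnorm y.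
Proof.
  unfold hnorm. rewrite <- sqrt_mult by apply hinner_pos.
  rewrite <- sqrt_Rsqr_abs. apply sqrt_le_1_alt. unfold Rsqr. apply CS_sq.
Qed.

Lemma hnorm_lt {Z : PreHilbert} (x : Z) e : 0 < e -> (hnorm x < e <-> hinner x x < e * e).
Proof.
  intro He. rewrite <- hnorm_sq. assert (H := hnorm_ge0 x). split; intro; nra.
Qed.


Lemma sq_le {a b : R} : 0 <= a -> 0 <= b -> a * a <= b * b -> a <= b.
Proof. intros. nra. Qed.

Lemma hnorm_tri {Z : PreHilbert} (x y : Z) : hnorm (hadd x y) <= hnorm x + hnorm y.
Proof.
  apply sq_le; try apply hnorm_ge0.
  - assert (H1 := hnorm_ge0 x); assert (H2 := hnorm_ge0 y); lra.
  - rewrite hnorm_sq. ipsimpl. rewrite (hinner_sym Z y x).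
    assert (H := CS x y). assert (H' := Rle_abs (hinner x y)).
    assert (E1 := hnorm_sq x); assert (E2 := hnorm_sq y). nra.
Qed.

Lemma hnorm_scal {Z : PreHilbert} a (x : Z) : hnorm (hscal a x) = Rabs a * hnorm x.
Proof.
  apply Rsqr_inj; unfold Rsqr.
  - apply hnorm_ge0.
  - apply Rmult_le_pos; [apply Rabs_pos|apply hnorm_ge0].
  - rewrite hnorm_sq. ipsimpl.
    replace (Rabs a * hnorm x * (Rabs a * hnorm x)) with ((Rabs a * Rabs a) * (hnorm x * hnorm x)) by ring.
    rewrite hnorm_sq, <- Rabs_mult, Rabs_right by nra. ring.
Qed.

Lemma hsub_chain {Z : PreHilbert} (a b c : Z) : hsub a c = hadd (hsub a b) (hsub b c).
Proof. apply vec_eq; intro; ipsimpl; ring. Qed.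

Lemma hnorm_tri_sub {Z : PreHilbert} (a b c : Z) : hnorm (hsub a c) <= hnorm (hsub a b) + hnorm (hsub b c).
Proof. rewrite (hsub_chain a b c). apply hnorm_tri. Qed.

Lemma hnorm_sym {Z : PreHilbert} (a b : Z) : hnorm (hsub a b) = hnorm (hsub b a).
Proof. unfold hnorm. f_equal. ipsimpl. rewrite (hinner_sym Z a b). ring. Qed.

Lemma hnorm_zero {Z : PreHilbert} (x : Z) : hnorm x = 0 -> x = hzero.
Proof. intro H. apply hinner_def. rewrite <- hnorm_sq, H. ring. Qed.

Lemma hsub_same {Z : PreHilbert} (x : Z) : hsub x x = hzero.
Proof. apply vec_eq; intro; ipsimpl; ring. Qed.

Lemma hnorm_0 {Z : PreHilbert} : hnorm (@hzero Z) = 0.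
Proof. unfold hnorm. rewrite ip_0l. apply sqrt_0. Qed.

Lemma ip_bound {Z : PreHilbert} (x y : Z) : Rabs (hinner x y) <= hnorm x * hnorm y.
Proof. apply CS. Qed.

Lemma cs_sub {Z : PreHilbert} (X : Z -> Prop) x y : closed_subspace X -> X x -> X y -> X (hsub x y).
Proof.
  intros (H0 & Ha & Hs & Hl) Hx Hy.
  replace (hsub x y) with (hadd x (hscal (-1) y)) by (apply vec_eq; intro; unfold hsub; ipsimpl; ring).
  auto.
Qed.

Lemma conv_inner {Z : PreHilbert} (u : nat -> Z) l v : hconverges u l ->
  forall eps, 0 < eps -> exists N, forall n, (N <= n)%nat -> Rabs (hinner (u n) v - hinner l v) < eps.
Proof.
  intros Hc eps He.
  assert (Hv := hnorm_ge0 v).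
  destruct (Hc (eps / (hnorm v + 1))) as [N HN].
  { apply Rdiv_lt_0_compat; lra. }
  exists N. intros n Hn. specialize (HN n Hn).
  replace (hinner (u n) v - hinner l v) with (hinner (hsub (u n) l) v) by (ipsimpl; ring).
  eapply Rle_lt_trans; [apply CS|].
  assert (Hu := hnorm_ge0 (hsub (u n) l)).
  apply Rle_lt_trans with (eps / (hnorm v + 1) * hnorm v).
  - apply Rmult_le_compat_r; lra.
  - assert (eps / (hnorm v + 1) * (hnorm v + 1) = eps) by (field; lra). nra.
Qed.

Lemma perp_closed {Z : PreHilbert} (v : Z) : closed_subspace (fun y => hinner v y = 0).
Proof.
  repeat split.
  - apply ip_0r.
  - intros x y Hx Hy. rewrite ip_addr, Hx, Hy. ring.
  - intros a x Hx. rewrite ip_scalr, Hx. ring.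
  - intros u l Hu Hc. destruct (Req_dec (hinner v l) 0) as [E|E]; auto.
    exfalso. destruct (conv_inner u l v Hc (Rabs (hinner v l))) as [N HN].
    { apply Rabs_pos_lt; auto. }
    specialize (HN N (le_n _)). rewrite (hinner_sym Z (u N)), Hu, (hinner_sym Z l) in HN.
    rewrite Rminus_0_l, Rabs_Ropp in HN. lra.
Qed.

Lemma closed_span_cs {Z : PreHilbert} (S : Z -> Prop) : closed_subspace (closed_span S).
Proof.
  unfold closed_span. split; [|split; [|split]].
  - intros Y HY _. apply HY.
  - intros x y Hx Hy Y HY HS. assert (HY' := HY). destruct HY' as (_ & Ha & _). apply Ha; [apply Hx|apply Hy]; auto.
  - intros a x Hx Y HY HS. assert (HY' := HY). destruct HY' as (_ & _ & Hs & _). apply Hs; apply Hx; auto.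
  - intros u l Hu Hc Y HY HS. assert (HY' := HY). destruct HY' as (_ & _ & _ & HL).
    apply (HL u l); auto. intro n. apply Hu; auto.
Qed.

Lemma inv_small r : 0 < r -> exists N, forall n, (N <= n)%nat -> / (INR n + 1) < r.
Proof.
  intro Hr. destruct (INR_unbounded (/ r)) as [N HN]. exists N. intros n Hn.
  apply le_INR in Hn. assert (Hp : 0 < INR n + 1) by (assert (H:=pos_INR n); lra).
  apply Rmult_lt_reg_l with (INR n + 1); auto. rewrite Rinv_r by lra.
  assert (r * / r = 1) by (field; lra).
  assert (/ r < INR n + 1) by lra. nra.
Qed.

Definition mid {Z : PreHilbert} (a b : Z) : Z := hadd (hscal (1/2) a) (hscal (1 - 1/2) b).

Lemma min_exists (Z : Hilbert) (C : Z -> Prop) (h : Z -> R) (k : R) (c0 : Z) :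
  0 < k -> C c0 ->
  (forall a b, C a -> C b -> C (mid a b)) ->
  (forall u l, (forall n, C (u n)) -> hconverges u l -> C l) ->
  (exists B, forall y, C y -> B <= h y) ->
  continuous_fun h ->
  (forall a b, C a -> C b -> h (mid a b) <= (h a + h b) / 2 - k * hinner (hsub a b) (hsub a b)) ->
  exists p, C p /\ forall y, C y -> h p <= h y.
Proof.
  intros Hk Hc0 Hmid Hcl [B HB] Hcont Hsc.
  set (E := fun r => exists y, C y /\ r = - h y).
  destruct (completeness E) as [M [HM1 HM2]].
  { exists (- B). intros r [y [Hy ->]]. specialize (HB y Hy). lra. }
  { exists (- h c0). exists c0. auto. }
  set (m := - M).
  assert (Hlow : forall y, C y -> m <= h y).
  { intros y Hy. assert (E (- h y)) by (exists y; auto). specialize (HM1 _ H). unfold m. lra. }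
  assert (Happ : forall eps, 0 < eps -> exists y, C y /\ h y < m + eps).
  { intros eps He. apply NNPP. intro Hn.
    assert (Hub : is_upper_bound E (- (m + eps))).
    { intros r [y [Hy ->]]. destruct (Rle_lt_dec (m + eps) (h y)) as [L|L]. lra.
      exfalso. apply Hn. exists y. auto. }
    specialize (HM2 _ Hub). unfold m in HM2. lra. }
  set (P := fun n y => C y /\ h y < m + / (INR n + 1)).
  assert (HP : forall n, P n (epsilon (inhabits c0) (P n))).
  { intro n. apply epsilon_spec. apply Happ. apply Rinv_0_lt_compat.
    assert (H:=pos_INR n); lra. }
  set (u := fun n => epsilon (inhabits c0) (P n)).
  assert (Hu : forall n, C (u n) /\ h (u n) < m + / (INR n + 1)) by (intro n; apply HP).
  assert (Hcau : hCauchy u).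
  { intros eps He. destruct (inv_small (k * eps * eps)) as [N HN].
    { apply Rmult_lt_0_compat; [apply Rmult_lt_0_compat|]; lra. }
    exists N. intros a b Ha Hb. apply hnorm_lt; auto.
    destruct (Hu a) as [Ca ha]. destruct (Hu b) as [Cb hb].
    specialize (HN a Ha) as Na. specialize (HN b Hb) as Nb.
    assert (L1 := Hlow _ (Hmid _ _ Ca Cb)). assert (L2 := Hsc _ _ Ca Cb).
    assert (k * hinner (hsub (u a) (u b)) (hsub (u a) (u b)) < k * (eps * eps)) by lra.
    apply Rmult_lt_reg_l with k; auto. }
  destruct (hcomplete Z u Hcau) as [p Hp].
  exists p. split.
  { apply (Hcl u p); auto. intro n. apply Hu. }
  assert (Hpm : h p <= m).
  { apply Rnot_lt_le. intro Hlt. set (eps := (h p - m) / 2).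
    assert (He : 0 < eps) by (unfold eps; lra).
    destruct (Hcont p eps He) as [d [Hd Hdd]].
    destruct (Hp d Hd) as [N1 HN1]. destruct (inv_small eps He) as [N2 HN2].
    set (n := Nat.max N1 N2).
    specialize (HN1 n (Nat.le_max_l _ _)). specialize (HN2 n (Nat.le_max_r _ _)).
    specialize (Hdd _ HN1). destruct (Hu n) as [_ Hn].
    apply Rabs_def2 in Hdd. unfold eps in *. lra. }
  intros y Hy. specialize (Hlow y Hy). lra.
Qed.

Lemma paral {Z : PreHilbert} (z a b : Z) :
  hinner (hsub (mid a b) z) (hsub (mid a b) z) =
  (hinner (hsub a z) (hsub a z) + hinner (hsub b z) (hsub b z)) / 2 - / 4 * hinner (hsub a b) (hsub a b).
Proof.
  unfold mid. ipsimpl. rewrite (hinner_sym Z b a), (hinner_sym Z z a), (hinner_sym Z z b). field.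
Qed.

Lemma sqdist_cont {Z : PreHilbert} (x : Z) : continuous_fun (fun y => hinner (hsub y x) (hsub y x)).
Proof.
  intros y0 eps He. set (n0 := hnorm (hsub y0 x)). assert (Hn0 := hnorm_ge0 (hsub y0 x)).
  exists (Rmin 1 (eps / (1 + 2 * n0))). split.
  { apply Rmin_pos; [lra|apply Rdiv_lt_0_compat; unfold n0 in *; lra]. }
  intros y Hy.
  replace (hinner (hsub y x) (hsub y x) - hinner (hsub y0 x) (hsub y0 x))
    with (hinner (hsub y y0) (hadd (hsub y x) (hsub y0 x)))
    by (ipsimpl; rewrite (hinner_sym Z y y0), (hinner_sym Z x y0), (hinner_sym Z x y); ring).
  eapply Rle_lt_trans; [apply CS|].
  assert (T := hnorm_tri (hsub y x) (hsub y0 x)).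
  assert (T2 := hnorm_tri_sub y y0 x).
  assert (H1 := Rmin_l 1 (eps / (1 + 2 * n0))). assert (H2 := Rmin_r 1 (eps / (1 + 2 * n0))).
  set (d := hnorm (hsub y y0)) in *. assert (Hd := hnorm_ge0 (hsub y y0)). fold d in Hd.
  assert (Hs := hnorm_ge0 (hadd (hsub y x) (hsub y0 x))).
  fold n0 in T, T2.
  assert (hnorm (hadd (hsub y x) (hsub y0 x)) <= 1 + 2 * n0) by lra.
  assert (d * (1 + 2 * n0) < eps).
  { assert (eps / (1 + 2 * n0) * (1 + 2 * n0) = eps) by (field; unfold n0 in *; lra).
    assert (d < eps / (1 + 2 * n0)) by lra. unfold n0 in *; nra. }
  nra.
Qed.

Lemma cont_plus {Z : PreHilbert} (f g : Z -> R) K : continuous_fun f -> continuous_fun g ->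
  continuous_fun (fun y => f y + K * g y).
Proof.
  intros Hf Hg y0 eps He.
  destruct (Hf y0 (eps / 2)) as [d1 [Hd1 H1]]; [lra|].
  destruct (Hg y0 (eps / 2 / (Rabs K + 1))) as [d2 [Hd2 H2]].
  { apply Rdiv_lt_0_compat; [lra|]. assert (H:=Rabs_pos K); lra. }
  exists (Rmin d1 d2). split; [apply Rmin_pos; auto|].
  intros y Hy. specialize (H1 y (Rlt_le_trans _ _ _ Hy (Rmin_l _ _))).
  specialize (H2 y (Rlt_le_trans _ _ _ Hy (Rmin_r _ _))).
  replace (f y + K * g y - (f y0 + K * g y0)) with ((f y - f y0) + K * (g y - g y0)) by ring.
  eapply Rle_lt_trans; [apply Rabs_triang|]. rewrite Rabs_mult.
  assert (HK := Rabs_pos K).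
  assert (eps / 2 / (Rabs K + 1) * (Rabs K + 1) = eps / 2) by (field; lra).
  assert (Rabs K * Rabs (g y - g y0) <= (Rabs K + 1) * (eps / 2 / (Rabs K + 1))).
  { assert (H0 := Rabs_pos (g y - g y0)). nra. }
  nra.
Qed.

Lemma quad_zero a b : 0 <= b -> (forall t, 0 <= 2 * t * a + t * t * b) -> a = 0.
Proof.
  intros Hb H. specialize (H (- a / (b + 1))).
  assert (E : (2 * (- a / (b + 1)) * a + (- a / (b + 1)) * (- a / (b + 1)) * b) * ((b + 1) * (b + 1))
              = - (a * a) * (b + 2)) by (field; lra).
  assert (0 <= (2 * (- a / (b + 1)) * a + (- a / (b + 1)) * (- a / (b + 1)) * b) * ((b + 1) * (b + 1))).
  { apply Rmult_le_pos; nra. }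
  nra.
Qed.

Lemma proj_exists (Z : Hilbert) (X : Z -> Prop) (z : Z) : closed_subspace X -> exists p, is_proj X z p.
Proof.
  intro HX. assert (HX' := HX). destruct HX' as (H0 & Ha & Hs & Hl).
  destruct (min_exists Z X (fun y => hinner (hsub y z) (hsub y z)) (/4) hzero) as [p [Hp Hmin]]; auto.
  - lra.
  - intros a b Xa Xb. unfold mid. auto.
  - exists 0. intros y _. apply hinner_pos.
  - apply sqdist_cont.
  - intros a b _ _. rewrite paral. lra.
  - exists p. split; auto. intros x Hx.
    assert (Ht : forall t, 0 <= 2 * t * hinner (hsub p z) x + t * t * hinner x x).
    { intro t. specialize (Hmin (hadd p (hscal t x)) (Ha _ _ Hp (Hs t x Hx))).
      ipsimpl_in Hmin. rewrite (hinner_sym Z x p), (hinner_sym Z x z), (hinner_sym Z z p) in Hmin.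
      ipsimpl. lra. }
    apply quad_zero in Ht; [|apply hinner_pos]. ipsimpl. ipsimpl_in Ht. lra.
Qed.

Lemma proj_spec (Z : Hilbert) (X : Z -> Prop) (z : Z) : closed_subspace X -> is_proj X z (proj X z).
Proof. intro HX. unfold proj. apply epsilon_spec. apply proj_exists; auto. Qed.

Lemma proj_unique {Z : PreHilbert} (X : Z -> Prop) z p q : closed_subspace X ->
  is_proj X z p -> is_proj X z q -> p = q.
Proof.
  intros HX [Xp Op] [Xq Oq]. apply sub_eq0, hinner_def.
  assert (Xd := cs_sub X p q HX Xp Xq).
  specialize (Op _ Xd). specialize (Oq _ Xd). ipsimpl. ipsimpl_in Op. ipsimpl_in Oq. lra.
Qed.

Lemma proj_eq (Z : Hilbert) (X : Z -> Prop) z p : closed_subspace X -> is_proj X z p -> proj X z = p.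
Proof. intros HX Hp. apply (proj_unique X z); auto. apply proj_spec; auto. Qed.

Lemma proj_in (Z : Hilbert) (X : Z -> Prop) x : closed_subspace X -> X x -> proj X x = x.
Proof.
  intros HX Hx. apply proj_eq; auto. split; auto. intros y Hy. rewrite hsub_same. apply ip_0l.
Qed.

Lemma proj_add_perp (Z : Hilbert) (X : Z -> Prop) z w : closed_subspace X -> orth X w ->
  proj X (hadd z w) = proj X z.
Proof.
  intros HX Hw. apply proj_eq; auto. destruct (proj_spec Z X z HX) as [Xp Op].
  split; auto. intros x Hx. specialize (Op x Hx). specialize (Hw x Hx). ipsimpl. ipsimpl_in Op. lra.
Qed.

Lemma perp_perp (Z : Hilbert) (X : Z -> Prop) y : closed_subspace X ->
  (forall w, orth X w -> hinner y w = 0) -> X y.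
Proof.
  intros HX H. destruct (proj_spec Z X y HX) as [Xp Op].
  assert (E : y = proj X y).
  { apply sub_eq0, hinner_def. specialize (H _ Op). specialize (Op _ Xp).
    ipsimpl. ipsimpl_in H. ipsimpl_in Op. rewrite (hinner_sym Z (proj X y) y). lra. }
  rewrite E. auto.
Qed.

Lemma orth_scal {Z : PreHilbert} (X : Z -> Prop) a w : orth X w -> orth X (hscal a w).
Proof. intros H x Hx. rewrite hinner_scall, H; auto. ring. Qed.
Lemma orth_opp {Z : PreHilbert} (X : Z -> Prop) w : orth X w -> orth X (hopp w).
Proof. intros H x Hx. rewrite ip_oppl, H; auto. ring. Qed.
Lemma orth_sub {Z : PreHilbert} (X : Z -> Prop) a b : orth X a -> orth X b -> orth X (hsub a b).
Proof. intros Ha Hb x Hx. rewrite ip_subl, Ha, Hb; auto. ring. Qed.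

Lemma lower_bound {Z : PreHilbert} (f : Z -> R) x : continuous_fun f -> convex f ->
  exists d, 0 < d /\ forall y, f x - 1 - 2 * hnorm (hsub y x) / d <= f y.
Proof.
  intros Hc Hv. destruct (Hc x 1 Rlt_0_1) as [d [Hd Hdd]]. exists d. split; auto. intro y.
  set (r := hnorm (hsub y x)). assert (Hr := hnorm_ge0 (hsub y x)). fold r in Hr.
  destruct (Rlt_le_dec r d) as [L|L].
  - specialize (Hdd y L). apply Rabs_def2 in Hdd.
    assert (0 <= 2 * r / d) by (apply Rmult_le_pos; [lra| left; apply Rinv_0_lt_compat; lra]). lra.
  - set (t := d / (2 * r)).
    assert (Ht0 : 0 < t) by (unfold t; apply Rdiv_lt_0_compat; lra).
    assert (Ht1 : t <= 1).
    { unfold t. apply Rmult_le_reg_r with (2 * r); [lra|]. field_simplify; lra. }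
    set (yt := hadd (hscal t y) (hscal (1 - t) x)).
    assert (E : hsub yt x = hscal t (hsub y x)) by (apply vec_eq; intro; unfold yt; ipsimpl; ring).
    assert (Hn : hnorm (hsub yt x) < d).
    { rewrite E, hnorm_scal, Rabs_right by lra. fold r. unfold t.
      replace (d / (2 * r) * r) with (d / 2) by (field; lra). lra. }
    specialize (Hdd _ Hn). apply Rabs_def2 in Hdd.
    assert (Cv := Hv y x t I I (conj (Rlt_le _ _ Ht0) Ht1)). fold yt in Cv.
    assert (t * (f y - f x) > -1) by nra.
    assert (E2 : 2 * r / d * t = 1) by (unfold t; field; lra).
    assert (f y - f x >= - (2 * r / d)).
    { assert (0 < 2 * r / d) by (apply Rdiv_lt_0_compat; lra). nra. }
    lra.
Qed.

Lemma small_t A B : (forall t, 0 < t <= 1 -> 0 <= t * A + t * t * B) -> 0 <= A.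
Proof.
  intro H. apply Rnot_lt_le. intro HA.
  set (t := Rmin 1 (- A / (2 * (Rabs B + 1)))).
  assert (HB := Rabs_pos B).
  assert (Ht0 : 0 < t) by (apply Rmin_pos; [lra|apply Rdiv_lt_0_compat; lra]).
  assert (Ht1 := Rmin_l 1 (- A / (2 * (Rabs B + 1)))). assert (Ht2 := Rmin_r 1 (- A / (2 * (Rabs B + 1)))).
  fold t in Ht1, Ht2.
  specialize (H t (conj Ht0 Ht1)).
  assert (0 <= A + t * B) by (apply Rmult_le_reg_l with t; auto; lra).
  assert (t * B <= t * Rabs B) by (apply Rmult_le_compat_l; [lra|apply Rle_abs]).
  assert (t * (2 * (Rabs B + 1)) <= - A).
  { apply Rmult_le_reg_r with (/ (2 * (Rabs B + 1))). apply Rinv_0_lt_compat; lra.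
    rewrite Rmult_assoc, Rinv_r by lra. lra. }
  nra.
Qed.

Lemma subgrad_near (Z : Hilbert) (f : Z -> R) : continuous_fun f -> convex f ->
  forall x eps, 0 < eps -> exists q xi, hnorm (hsub q x) < eps /\ subdiff f q xi.
Proof.
  intros Hc Hv x eps He.
  destruct (lower_bound f x Hc Hv) as [d [Hd Hlb]].
  set (K := (/ eps + 2 / d) / eps + 1).
  assert (HK0 : 0 < (/ eps + 2 / d) / eps).
  { apply Rdiv_lt_0_compat; auto. assert (0 < / eps) by (apply Rinv_0_lt_compat; lra).
    assert (0 < 2 / d) by (apply Rdiv_lt_0_compat; lra). lra. }
  assert (HK : 0 < K) by (unfold K; lra).
  set (h := fun y => f y + K * hinner (hsub y x) (hsub y x)).
  destruct (min_exists Z (fun _ => True) h (K / 4) x) as [p [_ Hmin]]; auto.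
  - lra.
  - exists (f x - 1 - / (K * d * d)). intros y _. unfold h.
    specialize (Hlb y). set (r := hnorm (hsub y x)) in *.
    rewrite <- hnorm_sq. fold r.
    assert (Eq : K * r * r - 2 * r / d + / (K * d * d) = K * ((r - / (K * d)) * (r - / (K * d))))
      by (field; lra).
    assert (0 <= K * ((r - / (K * d)) * (r - / (K * d)))) by (apply Rmult_le_pos; [lra|apply Rle_0_sqr]).
    lra.
  - apply cont_plus; auto. apply sqdist_cont.
  - intros a b _ _. unfold h. rewrite paral.
    assert (Cv := Hv a b (1/2) I I ltac:(lra)). unfold mid. lra.
  - exists p, (hscal (2 * K) (hsub x p)). split.
    + specialize (Hmin x I). unfold h in Hmin. rewrite hsub_same, ip_0l in Hmin.
      specialize (Hlb p). set (r := hnorm (hsub p x)) in *.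
      rewrite <- hnorm_sq in Hmin. fold r in Hmin.
      assert (Hr := hnorm_ge0 (hsub p x)). fold r in Hr.
      assert (Hk : K * r * r <= 1 + 2 * r / d) by lra.
      apply Rnot_le_lt. intro Hre.
      assert (Hr1 : 1 <= r / eps) by (apply Rmult_le_reg_r with eps; auto; field_simplify; lra).
      assert (K * r * r <= r * (/ eps + 2 / d)).
      { replace (r * (/ eps + 2 / d)) with (r / eps + 2 * r / d) by (field; lra). lra. }
      assert (K * r <= / eps + 2 / d) by (apply Rmult_le_reg_l with r; nra).
      assert (K * eps <= K * r) by (apply Rmult_le_compat_l; lra).
      assert (E : K * eps = / eps + 2 / d + eps) by (unfold K; field; lra).
      lra.
    + intro y. apply Rle_ge.
      assert (H : forall t, 0 < t <= 1 ->
        0 <= t * (f y - f p - hinner (hscal (2 * K) (hsub x p)) (hsub y p))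
             + t * t * (K * hinner (hsub y p) (hsub y p))).
      { intros t Ht. set (pt := hadd (hscal t y) (hscal (1 - t) p)).
        assert (Cv := Hv y p t I I ltac:(lra)). fold pt in Cv.
        specialize (Hmin pt I). unfold h in Hmin.
        assert (E : hinner (hsub pt x) (hsub pt x) - hinner (hsub p x) (hsub p x)
                    = 2 * t * hinner (hsub p x) (hsub y p) + t * t * hinner (hsub y p) (hsub y p)).
        { unfold pt. ipsimpl. rewrite (hinner_sym Z y p), (hinner_sym Z x p), (hinner_sym Z x y). ring. }
        assert (E2 : hinner (hscal (2 * K) (hsub x p)) (hsub y p) = - 2 * K * hinner (hsub p x) (hsub y p))
          by (ipsimpl; ring).
        rewrite E2. nra. }
      apply small_t in H. lra.
Qed.

Fixpoint psum {Z : PreHilbert} (u : nat -> Z) (n : nat) : Z :=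
  match n with O => hzero | S k => hadd (psum u k) (u k) end.

Fixpoint sumR (a : nat -> R) (n : nat) : R :=
  match n with O => 0 | S k => sumR a k + a k end.

Lemma half_pow_pos n : 0 < (/ 2) ^ n.
Proof. apply pow_lt. lra. Qed.

Lemma series_conv (Z : Hilbert) (u : nat -> Z) C : 0 <= C ->
  (forall n, hnorm (u n) <= C * (/ 2) ^ n) -> exists l, hconverges (psum u) l.
Proof.
  intros HC Hu.
  assert (Tail : forall n d, hnorm (hsub (psum u (n + d)) (psum u n)) <= 2 * C * ((/ 2) ^ n - (/ 2) ^ (n + d))).
  { intros n d. induction d as [|d IH].
    - rewrite Nat.add_0_r, hsub_same, hnorm_0. lra.
    - rewrite Nat.add_succ_r. simpl psum.
      replace (hsub (hadd (psum u (n + d)) (u (n + d)%nat)) (psum u n))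
        with (hadd (hsub (psum u (n + d)) (psum u n)) (u (n + d)%nat)) by (apply vec_eq; intro; ipsimpl; ring).
      eapply Rle_trans; [apply hnorm_tri|]. specialize (Hu (n + d)%nat). simpl pow. lra. }
  apply hcomplete. intros eps He.
  destruct (pow_lt_1_zero (/ 2) ltac:(rewrite Rabs_right; lra) (eps / (2 * C + 1))) as [N HN].
  { apply Rdiv_lt_0_compat; lra. }
  exists N.
  assert (G : forall n d, (N <= n)%nat -> hnorm (hsub (psum u (n + d)) (psum u n)) < eps).
  { intros n d Hn. specialize (HN n Hn). rewrite Rabs_right in HN by (left; apply half_pow_pos).
    eapply Rle_lt_trans; [apply Tail|].
    assert (0 < (/ 2) ^ (n + d)) by apply half_pow_pos.
    assert (eps / (2 * C + 1) * (2 * C + 1) = eps) by (field; lra).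
    assert (2 * C * (/ 2) ^ n <= (2 * C + 1) * (/ 2) ^ n) by (assert (Hq:=half_pow_pos n); nra).
    nra. }
  intros m n Hm Hn. destruct (Nat.le_ge_cases n m) as [L|L].
  - replace m with (n + (m - n))%nat by lia. apply G; auto.
  - rewrite hnorm_sym. replace n with (m + (n - m))%nat by lia. apply G; auto.
Qed.

Lemma sumR_ge (a : nat -> R) k N : (forall n, 0 <= a n) -> (k < N)%nat -> a k <= sumR a N.
Proof.
  intros Ha HkN. induction N as [|N IH]; [lia|]. simpl.
  destruct (Nat.eq_dec k N) as [->|Hne].
  - assert (0 <= sumR a N) by (clear - Ha; induction N; simpl; [lra| specialize (Ha N); lra]).
    lra.
  - assert (a k <= sumR a N) by (apply IH; lia). specialize (Ha N). lra.
Qed.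

Lemma key_interior (Z : Hilbert) (SS : Z -> Prop) (s : nat -> Z) (x0 : Z) :
  SS x0 -> (forall n, SS (s n)) ->
  (forall xi eps, SS xi -> 0 < eps -> exists n, hnorm (hsub (s n) xi) < eps) ->
  exists l', forall v, (forall xi, SS xi -> hinner xi v <= hinner l' v) ->
     forall xi, SS xi -> hinner xi v = hinner l' v.
Proof.
  intros Sx0 Ss Hd.
  set (c := fun n => (/ 2) ^ (S n)).
  set (w := fun n => c n / (1 + hnorm (s n))).
  set (u := fun n => hadd (hscal (w n) (s n)) (hscal (c n - w n) x0)).
  assert (Hc : forall n, 0 < c n) by (intro; apply half_pow_pos).
  assert (Hw : forall n, 0 < w n /\ w n <= c n /\ w n * hnorm (s n) <= c n).
  { intro n. assert (Hs := hnorm_ge0 (s n)). specialize (Hc n). unfold w.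
    split; [apply Rdiv_lt_0_compat; lra|split].
    - apply Rmult_le_reg_r with (1 + hnorm (s n)); [lra|]. field_simplify; nra.
    - replace (c n / (1 + hnorm (s n)) * hnorm (s n)) with (c n * (hnorm (s n) / (1 + hnorm (s n)))) by (field; lra).
      assert (hnorm (s n) / (1 + hnorm (s n)) <= 1).
      { apply Rmult_le_reg_r with (1 + hnorm (s n)); [lra|]. field_simplify; lra. }
      nra. }
  destruct (series_conv Z u ((1 + hnorm x0) / 2)) as [l Hl].
  { assert (H := hnorm_ge0 x0). lra. }
  { intro n. unfold u. eapply Rle_trans; [apply hnorm_tri|]. rewrite !hnorm_scal.
    destruct (Hw n) as (H1 & H2 & H3).
    rewrite (Rabs_right (w n)), (Rabs_right (c n - w n)) by lra.
    assert (Hx := hnorm_ge0 x0).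
    assert ((c n - w n) * hnorm x0 <= c n * hnorm x0) by nra.
    assert (Ec : c n = / 2 * (/ 2) ^ n) by reflexivity. rewrite Ec in *. lra. }
  exists l. intros v Hv.
  set (L := hinner l v).
  set (term := fun n => w n * (L - hinner (s n) v) + (c n - w n) * (L - hinner x0 v)).
  assert (Hterm : forall n, 0 <= term n).
  { intro n. unfold term. destruct (Hw n) as (H1 & H2 & H3).
    assert (A1 := Hv _ (Ss n)). assert (A2 := Hv _ Sx0). fold L in A1, A2.
    apply Rplus_le_le_0_compat; apply Rmult_le_pos; lra. }
  assert (Hid : forall N, L * (1 - (/ 2) ^ N) - hinner (psum u N) v = sumR term N).
  { induction N as [|N IH].
    - simpl. rewrite ip_0l. ring.
    - simpl sumR. rewrite <- IH. simpl psum. unfold u, term, c. ipsimpl. simpl pow. lra. }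
  assert (Hall : forall n, hinner (s n) v = L).
  { intro k. apply NNPP. intro Hne.
    assert (A1 := Hv _ (Ss k)). fold L in A1.
    assert (Hpos : 0 < term k).
    { unfold term. destruct (Hw k) as (H1 & H2 & H3). assert (A2 := Hv _ Sx0). fold L in A2.
      assert (0 < w k * (L - hinner (s k) v)) by (apply Rmult_lt_0_compat; lra).
      assert (0 <= (c k - w k) * (L - hinner x0 v)) by (apply Rmult_le_pos; lra). lra. }
    destruct (conv_inner (psum u) l v Hl (term k / 2)) as [N1 HN1]; [lra|].
    destruct (pow_lt_1_zero (/ 2) ltac:(rewrite Rabs_right; lra) (term k / 2 / (Rabs L + 1))) as [N2 HN2].
    { apply Rdiv_lt_0_compat; [lra|]. assert (H:=Rabs_pos L); lra. }
    set (N := Nat.max (S k) (Nat.max N1 N2)).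
    specialize (HN1 N ltac:(unfold N; lia)). specialize (HN2 N ltac:(unfold N; lia)).
    assert (G := sumR_ge term k N Hterm ltac:(unfold N; lia)).
    rewrite <- Hid in G. fold L in HN1.
    rewrite Rabs_right in HN2 by (left; apply half_pow_pos).
    assert (HL := Rabs_pos L).
    assert (Rabs L * (/ 2) ^ N < term k / 2).
    { assert (term k / 2 / (Rabs L + 1) * (Rabs L + 1) = term k / 2) by (field; lra).
      assert (Hq := half_pow_pos N). nra. }
    assert (L * (/ 2) ^ N >= - (Rabs L * (/ 2) ^ N)).
    { assert (Hq := half_pow_pos N). assert (- Rabs L <= L) by (assert (Hm := Rabs_Ropp L); assert (Hm2 := Rle_abs (- L)); lra).
      nra. }
    apply Rabs_def2 in HN1. lra. }
  intros xi Sxi. fold L. apply NNPP. intro Hne.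
  set (g := Rabs (hinner xi v - L)).
  assert (Hg : 0 < g) by (apply Rabs_pos_lt; lra).
  assert (Hvn := hnorm_ge0 v).
  destruct (Hd xi (g / (hnorm v + 1)) Sxi) as [n Hn]; [apply Rdiv_lt_0_compat; lra|].
  assert (E : hinner xi v - L = - hinner (hsub (s n) xi) v) by (ipsimpl; rewrite Hall; ring).
  assert (B := CS (hsub (s n) xi) v). rewrite <- Rabs_Ropp, <- E in B. fold g in B.
  assert (Hs := hnorm_ge0 (hsub (s n) xi)).
  assert (g / (hnorm v + 1) * (hnorm v + 1) = g) by (field; lra).
  assert (hnorm (hsub (s n) xi) * hnorm v <= g / (hnorm v + 1) * hnorm v) by (apply Rmult_le_compat_r; lra).
  nra.
Qed.

From Stdlib Require Cantor.

Lemma dense_seq (Z : Hilbert) (SS : Z -> Prop) x0 : separable Z -> SS x0 ->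
  exists s : nat -> Z, (forall n, SS (s n)) /\
    forall xi eps, SS xi -> 0 < eps -> exists n, hnorm (hsub (s n) xi) < eps.
Proof.
  intros [d Hd] Sx0.
  set (cl := fun n k y => hnorm (hsub y (d n)) < / (INR k + 1)).
  set (P := fun n k y => SS y /\ ((exists y', SS y' /\ cl n k y') -> cl n k y)).
  assert (HP : forall n k, P n k (epsilon (inhabits x0) (P n k))).
  { intros n k. apply epsilon_spec. destruct (classic (exists y', SS y' /\ cl n k y')) as [[y' [H1 H2]]|Hn].
    - exists y'. split; auto.
    - exists x0. split; auto. intro; contradiction. }
  set (s := fun m => let p := Cantor.of_nat m in epsilon (inhabits x0) (P (fst p) (snd p))).
  exists s. split.
  - intro m. unfold s. apply HP.
  - intros xi eps Sxi He.
    destruct (inv_small (eps / 2)) as [k Hk]; [lra|]. specialize (Hk k (le_n _)).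
    assert (Hkp : 0 < / (INR k + 1)) by (apply Rinv_0_lt_compat; assert (H := pos_INR k); lra).
    destruct (Hd xi (/ (INR k + 1)) Hkp) as [n Hn].
    exists (Cantor.to_nat (n, k)). unfold s. rewrite Cantor.cancel_of_to. simpl.
    destruct (HP n k) as [_ Hc].
    assert (Hc' : cl n k (epsilon (inhabits x0) (P n k))).
    { apply Hc. exists xi. split; auto. unfold cl. rewrite hnorm_sym. auto. }
    unfold cl in Hc'.
    eapply Rle_lt_trans; [apply (hnorm_tri_sub _ (d n))|]. lra.
Qed.

Theorem mainTheorem1 (Z : Hilbert) (f : Z -> R)
  (Hsep : separable Z) (Hcont : continuous_fun f) (Hconv : convex f) :
  exists (X : Z -> Prop) (v : Z) (c : Z -> R),
    decomposition f X v c /\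
    (forall X' v' c', decomposition f X' v' c' ->
       (forall z, X' z <-> X z) /\ v' = v /\ (forall x, X x -> c' x = c x)) /\
    (forall z, X z <-> closed_span
       (fun d => exists u w z1 y1, subdiff f z1 u /\ subdiff f y1 w /\ d = hsub u w) z) /\
    (forall z0 xi0, subdiff f z0 xi0 -> v = coproj X xi0).
Proof.
  set (D := fun d => exists u w z1 y1, subdiff f z1 u /\ subdiff f y1 w /\ d = hsub u w).
  set (X := closed_span D).
  assert (HX : closed_subspace X) by apply closed_span_cs.
  assert (HDX : forall d, D d -> X d) by (intros d Hd Y HY HS; apply HS; auto).
  destruct (subgrad_near Z f Hcont Hconv hzero 1 Rlt_0_1) as [q0 [xi0 [_ Hxi0]]].
  set (v := coproj X xi0).
  assert (F1 : forall xi z, subdiff f z xi -> X (hsub xi xi0)).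
  { intros xi z Hz. apply HDX. exists xi, xi0, z, q0. auto. }
  assert (Ov : orth X v) by (apply proj_spec; auto).
  assert (F2 : forall xi z, subdiff f z xi -> coproj X xi = v).
  { intros xi z Hz. apply sub_eq0, hinner_def.
    destruct (proj_spec Z X xi HX) as [P1 O1]. destruct (proj_spec Z X xi0 HX) as [P2 O2].
    set (q := hsub (coproj X xi) v).
    assert (Oq : orth X q) by (apply orth_sub; auto).
    assert (Xq : X q).
    { replace q with (hsub (hsub xi xi0) (hsub (proj X xi) (proj X xi0))).
      - apply cs_sub; auto. eapply F1; eauto. apply cs_sub; auto.
      - apply vec_eq; intro; unfold q, v, coproj; ipsimpl; ring. }
    apply Oq; auto. }
  assert (F3 : forall xi z w, subdiff f z xi -> orth X w -> hinner xi w = hinner v w).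
  { intros xi z w Hz Hw.
    destruct (proj_spec Z X xi0 HX) as [P2 O2].
    assert (A1 := Hw _ (F1 xi z Hz)). assert (A2 := Hw _ P2).
    unfold v, coproj. ipsimpl. ipsimpl_in A1.
    rewrite (hinner_sym Z w xi), (hinner_sym Z w xi0) in A1.
    rewrite (hinner_sym Z (proj X xi0) w). lra. }
  assert (F4 : forall y w, orth X w -> f (hadd y w) >= f y + hinner v w).
  { intros y w Hw. apply Rle_ge, Rnot_lt_le. intro Hlt.
    set (g := f y + hinner v w - f (hadd y w)). assert (Hg : 0 < g / 3) by (unfold g; lra).
    destruct (Hcont y _ Hg) as [d1 [Hd1 H1]]. destruct (Hcont (hadd y w) _ Hg) as [d2 [Hd2 H2]].
    destruct (subgrad_near Z f Hcont Hconv y (Rmin d1 d2) (Rmin_pos _ _ Hd1 Hd2)) as [q [xi [Hq Hs]]].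
    specialize (H1 q (Rlt_le_trans _ _ _ Hq (Rmin_l _ _))).
    assert (E : hsub (hadd q w) (hadd y w) = hsub q y) by (apply vec_eq; intro; ipsimpl; ring).
    specialize (H2 (hadd q w)). rewrite E in H2. specialize (H2 (Rlt_le_trans _ _ _ Hq (Rmin_r _ _))).
    assert (Hs2 := Hs (hadd q w)).
    assert (E2 : hsub (hadd q w) q = w) by (apply vec_eq; intro; ipsimpl; ring).
    rewrite E2, (F3 xi q w Hs Hw) in Hs2.
    apply Rabs_def2 in H1. apply Rabs_def2 in H2. unfold g in *. lra. }
  assert (F5 : forall y w, orth X w -> f (hadd y w) = f y + hinner v w).
  { intros y w Hw. apply Rle_antisym; [|apply Rge_le, F4; auto].
    assert (H := F4 (hadd y w) (hopp w) (orth_opp X w Hw)).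
    assert (E : hadd (hadd y w) (hopp w) = y) by (apply vec_eq; intro; ipsimpl; ring).
    rewrite E, ip_oppr in H. lra. }
  assert (F6 : forall z, f z = f (proj X z) + hinner v z).
  { intro z. destruct (proj_spec Z X z HX) as [Pz Oz].
    assert (E : z = hadd (proj X z) (hsub z (proj X z))) by (apply vec_eq; intro; ipsimpl; ring).
    rewrite E at 1. rewrite (F5 _ _ Oz). f_equal.
    rewrite ip_subr, (Ov _ Pz). ring. }
  set (SS := fun xi => exists z, subdiff f z xi).
  destruct (dense_seq Z SS xi0 Hsep ltac:(exists q0; auto)) as [s [Ss Hds]].
  destruct (key_interior Z SS s xi0 ltac:(exists q0; auto) Ss Hds) as [l' Hl'].
  assert (Hess : ess_dir_coercive_on X f).
  { exists (fun x => hinner l' x). split.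
    - split; [|split].
      + intros x y _ _. apply ip_addr.
      + intros a x _. apply ip_scalr.
      + exists (hnorm l'). intros x _. apply CS.
    - intros x u Xx Xu Hu0 M. apply NNPP. intro Hn.
      assert (Hle : forall xi, SS xi -> hinner xi u <= hinner l' u).
      { intros xi [z Hz]. apply Rnot_lt_le. intro Hlt. apply Hn.
        set (a := hinner xi u - hinner l' u).
        set (Cst := f z + hinner xi (hsub x z) - hinner l' x).
        exists ((M - Cst) / a). intros t Ht.
        assert (Ha : 0 < a) by (unfold a; lra).
        assert (Hta : M - Cst <= t * a).
        { apply Rmult_le_reg_r with (/ a); [apply Rinv_0_lt_compat; auto|].
          replace (t * a * / a) with t by (field; lra). auto. }
        specialize (Hz (hadd x (hscal t u))).
        replace (hinner xi (hsub (hadd x (hscal t u)) z)) with (hinner xi (hsub x z) + t * hinner xi u) in Hz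
          by (ipsimpl; ring).
        cbv beta. rewrite ip_addr, ip_scalr. unfold a, Cst in *. lra. }
      assert (Heq := Hl' u Hle).
      assert (Hperp : X u -> hinner u u = 0).
      { intro Xu'. apply (Xu' (fun y => hinner u y = 0)); [apply perp_closed|].
        intros d [a [b [z1 [y1 [Ha [Hb ->]]]]]].
        rewrite ip_subr, (hinner_sym Z u a), (hinner_sym Z u b).
        rewrite (Heq a), (Heq b); [ring| exists y1; auto | exists z1; auto]. }
      apply Hu0, hinner_def, Hperp, Xu. }
  assert (Hdec : decomposition f X v f).
  { split; [auto|split; [auto|split; [|split; [auto|auto]]]].
    intros x y t _ _ Ht. apply Hconv; auto. }
  exists X, v, f. split; [auto|split; [|split]].
  - intros X' v' c' (HX' & Ov' & Cc' & [l [[La [Ls _]] Lc]] & Hf').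
    assert (U1 : forall xi z w, subdiff f z xi -> orth X' w -> hinner xi w = hinner v' w).
    { intros xi z w Hz Hw.
      assert (Ht : forall t, f (hadd z (hscal t w)) = f z + t * hinner v' w).
      { intro t. rewrite Hf', (Hf' z), proj_add_perp; auto; [|apply orth_scal; auto].
        rewrite ip_addr, ip_scalr. ring. }
      assert (G : forall t, f z + t * hinner v' w >= f z + t * hinner xi w).
      { intro t. rewrite <- Ht. specialize (Hz (hadd z (hscal t w))).
        replace (hsub (hadd z (hscal t w)) z) with (hscal t w) in Hz by (apply vec_eq; intro; ipsimpl; ring).
        rewrite ip_scalr in Hz. auto. }
      assert (G1 := G 1). assert (G2 := G (-1)). lra. }
    assert (U2 : forall x, X x -> X' x).
    { intros x Hx. apply Hx; auto. intros d [a [b [z1 [y1 [Ha [Hb ->]]]]]].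
      apply perp_perp; auto. intros w Hw. rewrite ip_subl, (U1 a z1 w Ha Hw), (U1 b y1 w Hb Hw). ring. }
    assert (U3 : forall x, X' x -> X x).
    { intros d Hd. destruct (proj_spec Z X d HX) as [Pd Od].
      set (uu := hsub d (proj X d)).
      assert (Xuu : X' uu) by (apply cs_sub; auto).
      destruct (classic (uu = hzero)) as [E0|Hne].
      - apply sub_eq0 in E0. rewrite E0. auto.
      - exfalso.
        assert (HX'c := HX'). destruct HX'c as (X0 & Xadd & Xsc & _).
        set (k := hinner v uu - hinner v' uu - l uu).
        assert (Val : forall t, f (hadd hzero (hscal t uu)) - hinner v' (hadd hzero (hscal t uu))
                  - l (hadd hzero (hscal t uu)) = f hzero - l hzero + t * k).
        { intro t. rewrite (F5 _ _ (orth_scal X t uu Od)).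
          rewrite (La _ _ X0 (Xsc t uu Xuu)), (Ls t uu Xuu). unfold k. ipsimpl. ring. }
        assert (Cval : forall t, c' (hadd hzero (hscal t uu)) - l (hadd hzero (hscal t uu))
                   = f hzero - l hzero + t * k).
        { intro t. rewrite <- Val. rewrite (Hf' (hadd hzero (hscal t uu))).
          rewrite proj_in; auto. ring. }
        destruct (Lc hzero uu X0 Xuu Hne (f hzero - l hzero + 1)) as [T1 HT1].
        assert (Xm : X' (hopp uu)).
        { replace (hopp uu) with (hscal (-1) uu) by (apply vec_eq; intro; ipsimpl; ring). auto. }
        assert (Hne' : hopp uu <> hzero).
        { intro E. apply Hne, hinner_def. assert (H := ip_0l (@hzero Z)). rewrite <- E in H at 1.
          rewrite <- E in H. rewrite ip_oppl, ip_oppr in H. lra. }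
        destruct (Lc hzero (hopp uu) X0 Xm Hne' (f hzero - l hzero + 1)) as [T2 HT2].
        set (t := Rmax T1 T2).
        specialize (HT1 t (Rmax_l _ _)). specialize (HT2 t (Rmax_r _ _)). cbv beta in HT1, HT2.
        replace (hadd hzero (hscal t (hopp uu))) with (hadd hzero (hscal (- t) uu)) in HT2
          by (apply vec_eq; intro; ipsimpl; ring).
        rewrite Cval in HT1, HT2. lra. }
    split; [intro z; split; auto|split].
    + apply sub_eq0, hinner_def.
      set (q := hsub v' v).
      assert (Oq : orth X q).
      { apply orth_sub; auto. intros x Hx. apply Ov'. auto. }
      assert (E1 : hinner xi0 q = hinner v q) by (apply (F3 xi0 q0); auto).
      assert (E2 : hinner xi0 q = hinner v' q).
      { apply (U1 xi0 q0); auto. intros x Hx. apply Oq. auto. }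
      unfold q at 1. rewrite ip_subl. lra.
    + intros x Hx. rewrite (Hf' x), proj_in, (Ov' x); auto. ring.
  - intro z. reflexivity.
  - intros z0 xi Hxi. symmetry. eapply F2; eauto.
Qed.
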